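(* Assume $S^t(\mu,\nu)>0$ and let $X$ be $F^t$ conditioned on $F^t_{t+1}=r$. Then $D(X\,\|\,F^t)=D(X\,\|\,B^t)=-\log S^t(\mu,\nu)$.
   Context: $\Omega$ is a finite set, $S$ a symmetric substochastic matrix on $\Omega$ with nonnegative entries, $u,v$ nonnegative vectors on $\Omega$ with $\|u\|_2=\|v\|_2=1$, $\mu=u/\|u\|_1$, $\nu=v/\|v\|_1$, $t$ a positive integer, $S^t(\mu,\nu)=\sum_{x,y}\mu(x)S^t(x,y)\nu(y)$. Let $\Omega_\circ=\Omega\cup\{r\}$, $r\notin\Omega$, fix $z_0\in\Omega$. $F^t$ is the sub-probability measure on $\Omega_\circ^{\{-1,\ldots,t+1\}}$ with $\Pr[F^t=w]=\mu(w_0)\prod_{i=1}^tS(w_{i-1},w_i)\,c(w)$ for $w_{-1}=r$, $w_0,\ldots,w_t\in\Omega$, where $c(w)=\nu(w_t)$ if $w_{t+1}=r$, $c(w)=1-\nu(w_t)$ if $w_{t+1}=z_0$, and 0 otherwise. $B^t$ has $\Pr[B^t=w]=\nu(w_t)\prod_{i=1}^tS(w_i,w_{i-1})\,c'(w)$ for $w_{t+1}=r$, $w_0,\ldots,w_t\in\Omega$, with $c'(w)=\mu(w_0)$ if $w_{-1}=r$, $c'(w)=1-\mu(w_0)$ if $w_{-1}=z_0$, and 0 otherwise. $X$ has $\Pr[X=w]=\Pr[F^t=w]/S^t(\mu,\nu)$ for $w_{t+1}=r$. For nonnegative functions $p,q$ on a countable set, $D(p\|q)=\sum_x p(x)\log\frac{p(x)}{q(x)}$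 (terms with $p(x)=0$ are 0; log base 2); for random variables, $D(X\|Y)$ is the divergence of their distribution functions. *)

(* Defs.v *)
From HB Require Import structures.
From mathcomp Require Import all_boot all_order all_algebra.
From mathcomp Require Import all_classical all_reals.
From mathcomp Require Import ereal exp.
Set Implicit Arguments. Unset Strict Implicit. Unset Printing Implicit Defensive.
Import Order.TTheory GRing.Theory Num.Theory.
Local Open Scope ring_scope.

(* Omega is the finite nonempty set 'I_n.+1; Omega_o = option 'I_n.+1 with
   r = None.  A walk w in Omega_o^{-1,...,t+1} is a finite function on
   'I_t.+3, where the ordinal k stands for the paper index k-1. *)
Definition walk (n t : nat) := {ffun 'I_t.+3 -> option 'I_n.+1}.

Section Defs.
Variable R : realType.

Definition log2 (x : R) : R := ln x / ln 2.

Definition l1normalize n (u : 'I_n.+1 -> R) : 'I_n.+1 -> R :=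
  fun x => u x / \sum_y `|u y|.

Definition Spair n (S : 'M[R]_n.+1) (t : nat) (mu nu : 'I_n.+1 -> R) : R :=
  \sum_x \sum_y mu x * (S ^+ t) x y * nu y.

Variables (n t : nat) (S : 'M[R]_n.+1) (mu nu : 'I_n.+1 -> R) (z0 : 'I_n.+1).

(* W w i = w_i for paper index i in {0..t} (default z0, only used when w_i \in Omega) *)
Definition W (w : walk n t) (i : nat) : 'I_n.+1 := odflt z0 (w (inord i.+1)).

Definition inner_in_Omega (w : walk n t) : bool :=
  [forall k : 'I_t.+1, w (inord k.+1) != None].

Definition cF (w : walk n t) : R :=
  match w (inord t.+2) with
  | None => nu (W w t)
  | Some z => if z == z0 then 1 - nu (W w t) else 0
  end.

Definition Fdist (w : walk n t) : R :=
  if (w (inord 0) == None) && inner_in_Omega w then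
    mu (W w 0) * (\prod_(1 <= i < t.+1) S (W w i.-1) (W w i)) * cF w
  else 0.

Definition cB (w : walk n t) : R :=
  match w (inord 0) with
  | None => mu (W w 0)
  | Some z => if z == z0 then 1 - mu (W w 0) else 0
  end.

Definition Bdist (w : walk n t) : R :=
  if (w (inord t.+2) == None) && inner_in_Omega w then
    nu (W w t) * (\prod_(1 <= i < t.+1) S (W w i) (W w i.-1)) * cB w
  else 0.

Definition Xdist (w : walk n t) : R :=
  if w (inord t.+2) == None then Fdist w / Spair S t mu nu else 0.

End Defs.

Definition KL (R : realType) (A : finType) (p q : A -> R) : \bar R :=
  (\sum_(x : A) (if p x == 0%R then 0
                 else if q x == 0%R then +oo
                 else (p x * log2 (p x / q x))%:E))%E.

(* Main.v *)
Require Import Defs.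
From HB Require Import structures.
From mathcomp Require Import all_boot all_order all_algebra.
From mathcomp Require Import all_classical all_reals.
From mathcomp Require Import exp.
From mathcomp Require Import zify.
Import Order.TTheory GRing.Theory Num.Theory.
Set Implicit Arguments. Unset Strict Implicit.
Local Open Scope ring_scope.

Section Path.
Variable R : realType.

Definition fc (T : finType) k (x : T) (q : {ffun 'I_k -> T}) : {ffun 'I_k.+1 -> T} :=
  [ffun i => match unlift ord0 i with Some j => q j | None => x end].

Lemma sum_ffunS (T : finType) k (F : {ffun 'I_k.+1 -> T} -> R) :
  \sum_p F p = \sum_x \sum_(q : {ffun 'I_k -> T}) F (fc x q).
Proof.
rewrite pair_big /=.
rewrite (reindex (fun xq : T * {ffun 'I_k -> T} => fc xq.1 xq.2)) //=.
exists (fun p : {ffun 'I_k.+1 -> T} => (p ord0, [ffun j => p (lift ord0 j)])).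
  move=> [x q] _ /=; congr pair; first by rewrite ffunE unlift_none.
  by apply/ffunP => j; rewrite !ffunE liftK.
move=> p _; apply/ffunP => i; rewrite ffunE /=.
by case: unliftP => [j ->|->]; rewrite ?ffunE.
Qed.

Lemma fc0 (T : finType) k (x : T) (q : {ffun 'I_k -> T}) : fc x q (inord 0) = x.
Proof.
have -> : (inord 0 : 'I_k.+1) = ord0 by apply/val_inj; rewrite /= inordK.
by rewrite ffunE unlift_none.
Qed.

Lemma fcS (T : finType) k (x : T) (q : {ffun 'I_k.+1 -> T}) j :
  (j <= k)%N -> fc x q (inord j.+1) = q (inord j).
Proof.
move=> hj.
have -> : (inord j.+1 : 'I_k.+2) = lift ord0 (inord j).
  apply/val_inj; rewrite /= /bump /= !inordK // ltnS.
by rewrite ffunE liftK.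
Qed.

Lemma path_sum n k (S : 'M[R]_n.+1) (g h : 'I_n.+1 -> R) :
  \sum_(p : {ffun 'I_k.+1 -> 'I_n.+1}) g (p (inord 0)) *
     (\prod_(1 <= i < k.+1) S (p (inord i.-1)) (p (inord i))) * h (p (inord k))
  = \sum_x \sum_y g x * (S ^+ k) x y * h y.
Proof.
elim: k g => [|k IH] g.
  rewrite sum_ffunS; apply: eq_bigr => x _.
  under eq_bigr => q _ do rewrite big_geq // mulr1 !fc0.
  rewrite [RHS](bigD1 x) //= expr0 mxE eqxx mulr1 [X in _ + X]big1 ?addr0; last first.
    by move=> y /negbTE; rewrite eq_sym mxE => ->; rewrite mulr0 mul0r.
  rewrite (@big_pred1 _ _ _ _ [ffun=> x]) // => q.
  by apply/esym/eqP/ffunP => -[].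
rewrite sum_ffunS; apply: eq_bigr => x _.
transitivity (g x * \sum_(q : {ffun 'I_k.+1 -> 'I_n.+1}) S x (q (inord 0)) *
     (\prod_(1 <= i < k.+1) S (q (inord i.-1)) (q (inord i))) * h (q (inord k))).
  rewrite mulr_sumr; apply: eq_bigr => q _.
  rewrite fc0 big_nat_recl //= fc0 fcS // fcS //.
  rewrite (@eq_big_nat _ _ _ 1 k.+1 _ (fun i => S (q (inord i.-1)) (q (inord i)))); last first.
    move=> [|i] // /andP[_ hi]; rewrite fcS; last exact: ltnW hi. by rewrite fcS.

  by rewrite /= !mulrA.
rewrite IH mulr_sumr.
under [RHS]eq_bigr => y _ do rewrite exprS -mulmxE mxE big_distrr /= big_distrl /=.
rewrite [RHS]exchange_big /=; apply: eq_bigr => z _; rewrite mulr_sumr.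
by apply: eq_bigr => y _; rewrite !mulrA.
Qed.

Section Walk.
Variables (n t : nat) (S : 'M[R]_n.+1) (mu nu : 'I_n.+1 -> R) (z0 : 'I_n.+1).

Definition cond (w : walk n t) : bool :=
  [&& w (inord 0) == None, inner_in_Omega w & w (inord t.+2) == None].

Definition emb (p : {ffun 'I_t.+1 -> 'I_n.+1}) : walk n t :=
  [ffun k : 'I_t.+3 => if (0 < k < t.+2)%N then Some (p (inord k.-1)) else None].

Definition proj (w : walk n t) : {ffun 'I_t.+1 -> 'I_n.+1} := [ffun i : 'I_t.+1 => W z0 w i].

Definition gw (w : walk n t) : R :=
  mu (W z0 w 0) * (\prod_(1 <= i < t.+1) S (W z0 w i.-1) (W z0 w i)) * nu (W z0 w t).

Lemma W_emb p i : (i <= t)%N -> W z0 (emb p) i = p (inord i).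
Proof. by move=> hi; rewrite /W ffunE inordK ?ltnS //= ?hi // ltnW. Qed.

Lemma cond_emb p : cond (emb p).
Proof.
rewrite /cond !ffunE !inordK //= ltnn andbT.
apply/forallP => k; have hk := ltn_ord k; rewrite ffunE inordK; last by rewrite ltnS ltnW. by rewrite /= ltnS hk.
Qed.

Lemma proj_emb p : proj (emb p) = p.
Proof.
apply/ffunP => i; rewrite ffunE W_emb; last by rewrite -ltnS ltn_ord.
by congr (p _); apply/val_inj; rewrite /= inordK.
Qed.

Lemma emb_proj w : cond w -> emb (proj w) = w.
Proof.
case/and3P => /eqP h0 /forallP hin /eqP ht.
apply/ffunP => k; rewrite ffunE.
case: ifP => [/andP[hk1 hk2]|hk].
  rewrite ffunE /W inordK; last by case: (k : nat) hk1 hk2 => // k' _ /ltnW.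
  have -> : (k.-1.+1 = k)%N by case: (k : nat) hk1.
  rewrite inord_val.
  have := hin (inord k.-1); rewrite inordK; last by case: (k : nat) hk1 hk2 => // k' _ /ltnW.
  have -> : (k.-1.+1 = k)%N by case: (k : nat) hk1.
  by rewrite inord_val; case: (w k).
have : (k == 0 :> nat) || (k == t.+2 :> nat).
  have := ltn_ord k; move/negbT: hk; rewrite negb_and -!leqNgt.
  by case/orP; lia.
case/orP => /eqP hk0.
  by rewrite -h0; congr (w _); apply/val_inj; rewrite /= inordK // ?hk0 //; apply/esym/hk0.
by rewrite -ht; congr (w _); apply/val_inj; rewrite /= inordK // ?hk0 //; apply/esym/hk0.
Qed.

Lemma sum_cond (G : walk n t -> R) :
  \sum_w (if cond w then G w else 0) = \sum_p G (emb p).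
Proof.
transitivity (\sum_w \sum_(p | w == emb p) G (emb p)).
  apply: eq_bigr => w _; case: ifP => hc.
    rewrite (@big_pred1 _ _ _ _ (proj w)); first by rewrite emb_proj.
    move=> p /=; apply/eqP/eqP => [->|->]; first by rewrite proj_emb.
    by rewrite emb_proj.
  rewrite big_pred0 // => p; apply/negbTE/eqP => hw.
  by move: hc; rewrite hw cond_emb.
under eq_bigr => w _ do rewrite big_mkcond.
rewrite exchange_big /=; apply: eq_bigr => p _.
by rewrite -big_mkcond big_pred1_eq.
Qed.

Lemma sum_gw : \sum_w (if cond w then gw w else 0) = Spair S t mu nu.
Proof.
rewrite sum_cond /Spair -path_sum; apply: eq_bigr => p _.
rewrite /gw !W_emb //; congr (_ * _ * _).
apply: eq_big_nat => i /andP[hi1 hi2]; rewrite !W_emb // ?ltnS //.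
by apply: leq_trans (leq_pred _) _; rewrite -ltnS.
Qed.

Lemma X_eq w : Xdist S mu nu z0 w = (if cond w then gw w else 0) / Spair S t mu nu.
Proof.
rewrite /Xdist /Fdist /cond /cF /gw; case: (w (inord t.+2)) => [z|] /=.
  by rewrite !andbF mul0r.
by rewrite andbT; case: ifP => _ //; rewrite mul0r.
Qed.

Lemma F_eq w : cond w -> Fdist S mu nu z0 w = gw w.
Proof.
case/and3P => h0 hin /eqP ht.
by rewrite /Fdist /cF /gw h0 hin ht.
Qed.

Lemma B_eq w : (forall x y, S x y = S y x) -> cond w -> Bdist S mu nu z0 w = gw w.
Proof.
move=> hS /and3P[/eqP h0 hin ht].
rewrite /Bdist /cB /gw ht hin h0 /= mulrC; idtac.
rewrite -mulrA [X in _ * X]mulrC; congr (_ * (_ * _)); apply: eq_bigr => i _; exact: hS.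
Qed.

End Walk.
End Path.

Theorem lemma3p3 (R : realType) (n t : nat) (S : 'M[R]_n.+1)
    (u v : 'I_n.+1 -> R) (z0 : 'I_n.+1) :
  (0 < t)%N ->
  S^T = S ->
  (forall x y, 0 <= S x y) ->
  (forall x, \sum_y S x y <= 1) ->
  (forall x, 0 <= u x) -> (forall x, 0 <= v x) ->
  Num.sqrt (\sum_x u x ^+ 2) = 1 -> Num.sqrt (\sum_x v x ^+ 2) = 1 ->
  let mu := l1normalize u in
  let nu := l1normalize v in
  0 < Spair S t mu nu ->
  KL (@Xdist R n t S mu nu z0) (@Fdist R n t S mu nu z0) = (- log2 (Spair S t mu nu))%:E /\
  KL (@Xdist R n t S mu nu z0) (@Bdist R n t S mu nu z0) = (- log2 (Spair S t mu nu))%:E.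
Proof.
move=> _ hST _ _ _ _ _ _ mu nu hs.
have hS : forall x y, S x y = S y x by move=> x y; rewrite -{1}hST mxE.
have hs0 : Spair S t mu nu != 0 by rewrite gt_eqF.
have key : forall q : walk n t -> R, (forall w, cond w -> q w = gw S mu nu z0 w) ->
    KL (@Xdist R n t S mu nu z0) q = (- log2 (Spair S t mu nu))%:E.
  move=> q hq; rewrite /KL.
  transitivity (\sum_(w : walk n t) (@Xdist R n t S mu nu z0 w * - log2 (Spair S t mu nu))%:E)%E.
    apply: eq_bigr => w _.
    have [hX|hX] := eqVneq (Xdist S mu nu z0 w) 0; first by rewrite hX mul0r.
    have hc : cond w.
      by move: hX; rewrite X_eq; case: ifP => //; rewrite mul0r eqxx.
    have hg : gw S mu nu z0 w != 0.
      by move: hX; rewrite X_eq hc; apply: contra => /eqP ->; rewrite mul0r.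
    rewrite hq // (negbTE hg); congr (_%:E); congr (_ * _).
    rewrite X_eq hc mulrAC divff // mul1r /log2 lnV ?posrE // mulNr //.
  rewrite -(big_morph _ EFinD (erefl _)) -mulr_suml; congr (_%:E); rewrite -[RHS]mul1r; congr (_ * _).
  under eq_bigr do rewrite X_eq.
  by rewrite -mulr_suml sum_gw divff.
split; apply: key => w hc; [exact: F_eq | exact: B_eq].
Qed.
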